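(* For every integer $n\ge 2$, let $\mathcal{A}_n$ denote the set of Dyck $n$-paths whose terminal descent has even length and all of whose other descents to ground level (if any) have odd length. Then $|\mathcal{A}_n| = C_{n-1}$, where $C_m=\frac{1}{m+1}\binom{2m}{m}$ is the $m$-th Catalan number.
   Context: A Dyck $n$-path is a lattice path consisting of $n$ upsteps $U=(1,1)$ and $n$ downsteps $D=(1,-1)$ that starts and ends at height $0$ (ground level) and never goes below ground level. A descent is a maximal run of consecutive downsteps; its length is the number of downsteps in it. The terminal descent is the descent that ends at the final point of the path. A return is a downstep ending at ground level, and a descent to ground level is a descent whose last step is a return. *)

(* Defs.v *)
From mathcomp Require Import all_boot.
Set Implicit Arguments. Unset Strict Implicit. Unset Printing Implicit Defensive.

(* A lattice path is encoded as a sequence of steps: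
   true = U = (1,1) (upstep), false = D = (1,-1) (downstep). *)

Definition ups (p : seq bool) (k : nat) : nat := count id (take k p).
Definition downs (p : seq bool) (k : nat) : nat := count negb (take k p).

Definition dyck_path (n : nat) (p : seq bool) : bool :=
  [&& count id p == n, count negb p == n &
      [forall k : 'I_(size p).+1, downs p k <= ups p k]].

(* The steps at positions i, ..., j-1 (0-indexed) form a descent, i.e. a
   maximal run of consecutive downsteps: i < j, all of them are D, the step
   before (if any) is not D and the step at position j (if any) is not D.
   Its length is j - i, and it ends at the point after j steps. *)
Definition is_descent (p : seq bool) (i j : nat) : bool :=
  [&& i < j, j <= size p,
      [forall k : 'I_(size p), (i <= k < j) ==> ~~ nth true p k],
      (i == 0) || nth false p i.-1 &
      (j == size p) || nth false p j].

Definition ends_at_ground (p : seq bool) (j : nat) : bool :=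
  ups p j == downs p j.

Definition in_A (n : nat) (p : seq bool) : bool :=
  dyck_path n p &&
  [forall i : 'I_(size p).+1, forall j : 'I_(size p).+1,
     is_descent p i j ==>
       (if j == size p :> nat then ~~ odd (j - i)
        else ends_at_ground p j ==> odd (j - i))].

Definition A_set (n : nat) : {set (2 * n).-tuple bool} :=
  [set t : (2 * n).-tuple bool | in_A n t].

Definition catalan (m : nat) : nat := 'C(2 * m, m) %/ m.+1.

(* Main.v *)
Require Import Defs.
From mathcomp Require Import all_boot zify.
From Stdlib Require Import ClassicalEpsilon.
Set Implicit Arguments. Unset Strict Implicit. Unset Printing Implicit Defensive.

Lemma card_cnt L k : #|[set t : L.-tuple bool | count id t == k]| = 'C(L, k).
Proof.
have cE (t : L.-tuple bool) : #|[set i : 'I_L | tnth t i]| = count id t.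
  rewrite cardE /enum_mem -enumT size_filter.
  rewrite -[in RHS](map_tnth_enum t) count_map.
  by apply: eq_count => i /=; rewrite inE.
rewrite -[in RHS](card_ord L) -card_draws.
pose phi (t : L.-tuple bool) := [set i : 'I_L | tnth t i].
have phi_inj : injective phi.
  move=> t1 t2 E; apply: eq_from_tnth => i.
  have := congr1 (fun X : {set 'I_L} => i \in X) E; by rewrite /phi !inE.
rewrite -(card_imset _ phi_inj); apply: eq_card => A.
rewrite [in RHS]inE; apply/imsetP/idP.
  by case=> t; rewrite inE => /eqP <- ->; rewrite cE.
move=> /eqP HA; exists [tuple (i \in A) | i < L].
  by rewrite inE -cE -HA; apply/eqP; apply: eq_card => i; rewrite !inE tnth_mktuple.
by rewrite /phi; apply/setP=> i; rewrite !inE tnth_mktuple.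
Qed.

Fixpoint pk (h : nat) (s : seq bool) : bool :=
  match s with
  | [::] => true
  | b :: s' => if b then pk h.+1 s' else if h is h'.+1 then pk h' s' else false
  end.

Fixpoint refl (h : nat) (s : seq bool) : seq bool :=
  match s with
  | [::] => [::]
  | b :: s' => if b then true :: refl h.+1 s'
               else if h is h'.+1 then false :: refl h' s' else false :: map negb s'
  end.

Lemma size_refl h s : size (refl h s) = size s.
Proof. by elim: s h => [|[] s IH] [|h] //=; rewrite ?IH ?size_map. Qed.

Lemma reflK h s : refl h (refl h s) = s.
Proof.
elim: s h => [|[] s IH] [|h] //=; rewrite ?IH //.
by rewrite mapK //; exact: negbK.
Qed.

Lemma refl_pk h s : pk h s -> refl h s = s.
Proof. by elim: s h => [|[] s IH] [|h] //= H; rewrite IH. Qed.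

Lemma refl_npk h s : ~~ pk h s -> ~~ pk h (refl h s).
Proof. by elim: s h => [|[] s IH] [|h] //= H; apply: IH. Qed.

Lemma refl_cnt h s : ~~ pk h s ->
  count id (refl h s) + count id s + 2 * h + 2 = count negb (refl h s) + count negb s.
Proof.
elim: s h => [|[] s IH] [|h] //= H.
- have := IH 1 H; lia.
- have := IH h.+2 H; lia.
- rewrite !count_map.
  have E : count (preim negb id) s = count negb s by apply: eq_count.
  have E3 : count (preim negb negb) s = count id s by apply: eq_count => -[].
  rewrite E E3; lia.
- have := IH h H; lia.
Qed.

Lemma pk_cnt h s : pk h s -> count negb s <= h + count id s.
Proof. elim: s h => [|[] s IH] [|h] //= H; have := IH _ H; lia. Qed.

Lemma pkP h s : pk h s <-> forall k, count negb (take k s) <= h + count id (take k s).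
Proof.
elim: s h => [|b s IH] h /=; first by split => // _ k.
split.
- move=> H [|k] /=; first lia.
  case: b H => H.
  + have := (IH h.+1).1 H k; lia.
  + case: h H => [|h] H //; have := (IH h).1 H k; lia.
- move=> H; case: b H => H.
  + apply/IH => k; have := H k.+1; rewrite /=; lia.
  + case: h H => [|h] H; first by move: (H 1); rewrite /= take0.

    apply/IH => k; have := H k.+1; rewrite /=; lia.
Qed.

Lemma cnt_size s : count id s + count negb s = size s.
Proof. by elim: s => [|[] s IH] //=; rewrite -IH; lia. Qed.

Lemma forall_pk p : [forall k : 'I_(size p).+1, downs p k <= ups p k] = pk 0 p.
Proof.
apply/forallP/idP.
- move=> H; apply/pkP => k; rewrite add0n.
  case: (leqP k (size p)) => Hk.
  + exact: (H (Ordinal (n:=(size p).+1) (m:=k) Hk)).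
  + rewrite take_oversize ?(ltnW Hk) //.
    by have := H ord_max; rewrite /downs /ups /= take_size.
- by move=> /pkP H k; have := H k.
Qed.

Lemma dyck_pk m p : size p = 2 * m -> dyck_path m p = (count id p == m) && pk 0 p.
Proof.
move=> Hs; rewrite /dyck_path forall_pk.
have := cnt_size p; rewrite Hs => E.
case: eqP => Hc //=.
have -> : count negb p = m by lia.
by rewrite eqxx.
Qed.

Definition rt L (t : L.-tuple bool) : L.-tuple bool :=
  @Tuple L bool (refl 0 t) (introT eqP (etrans (size_refl 0 t) (size_tuple t))).

Lemma rtK L : cancel (@rt L) (@rt L).
Proof. by move=> t; apply: val_inj; rewrite /= reflK. Qed.

Lemma card_dyck m : 0 < m -> #|[set t : (2*m).-tuple bool | dyck_path m t]| = catalan m.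
Proof.
move=> m0.
set D := [set t : (2*m).-tuple bool | dyck_path m t].
set Bal := [set t : (2*m).-tuple bool | count id t == m].
set Neg := [set t : (2*m).-tuple bool | count id t == m.-1].
have DB : D \subset Bal by apply/subsetP => t; rewrite !inE dyck_pk ?size_tuple // => /andP[].
have E1 : #|Bal :\: D| = #|Bal| - #|D| by rewrite cardsD (setIidPr DB).
have E2 : #|Bal :\: D| = #|Neg|.
  rewrite -(card_imset _ (can_inj (@rtK (2*m)))); apply: eq_card => u.
  rewrite [in RHS]inE; apply/imsetP/idP.
  - case=> t; rewrite !inE dyck_pk ?size_tuple // => /andP[Hp Hc] ->.
    rewrite Hc /= in Hp.
    have := refl_cnt Hp; have := cnt_size (refl 0 t); have := cnt_size t.
    rewrite size_refl size_tuple (eqP Hc) /= => H1 H2 H3; apply/eqP; lia.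
  - move=> Hu; exists (rt u); last by rewrite rtK.
    have Hp : ~~ pk 0 u.
      apply/negP => /pk_cnt; have := cnt_size u; rewrite size_tuple (eqP Hu); lia.
    rewrite !inE dyck_pk ?size_tuple //=.
    have Hc : count id (refl 0 u) == m.
      have := refl_cnt Hp; have := cnt_size (refl 0 u); have := cnt_size u.
      rewrite size_refl size_tuple (eqP Hu) /= => H1 H2 H3; apply/eqP; lia.
    by rewrite Hc /= (negbTE (refl_npk Hp)).
have HB : #|Bal| = 'C(2*m, m) by rewrite card_cnt.
have HN : #|Neg| = 'C(2*m, m.+1).
  rewrite card_cnt -bin_sub; last lia.
  by congr 'C(_, _); lia.
have HD : #|D| = 'C(2*m, m) - 'C(2*m, m.+1).
  have := subset_leq_card DB; lia.
rewrite HD /catalan.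
have := mul_bin_left (2*m) m.
have -> : 2 * m - m = m by lia.
move=> H.
have Hle : 'C(2*m, m.+1) <= 'C(2*m, m) by nia.
have EC : 'C(2 * m, m) = ('C(2*m, m) - 'C(2*m, m.+1)) * m.+1 by nia.
by rewrite [X in X %/ _]EC mulnK.
Qed.

Definition dy (s : seq bool) : Prop :=
  (forall k, downs s k <= ups s k) /\ count id s = count negb s.
Definition td (s : seq bool) : nat := find id (rev s).
Definition prm (b : seq bool) : seq bool := true :: b ++ [:: false].

Lemma ups0 s : ups s 0 = 0. Proof. by rewrite /ups take0. Qed.
Lemma downs0 s : downs s 0 = 0. Proof. by rewrite /downs take0. Qed.
Lemma ups_over s k : size s <= k -> ups s k = count id s.
Proof. by move=> H; rewrite /ups take_oversize. Qed.
Lemma downs_over s k : size s <= k -> downs s k = count negb s.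
Proof. by move=> H; rewrite /downs take_oversize. Qed.
Lemma ups_catl a c k : k <= size a -> ups (a ++ c) k = ups a k.
Proof. by move=> H; rewrite /ups takel_cat. Qed.
Lemma downs_catl a c k : k <= size a -> downs (a ++ c) k = downs a k.
Proof. by move=> H; rewrite /downs takel_cat. Qed.
Lemma ups_catr a c k : ups (a ++ c) (size a + k) = count id a + ups c k.
Proof. by rewrite /ups takeD take_size_cat // drop_size_cat // count_cat. Qed.
Lemma downs_catr a c k : downs (a ++ c) (size a + k) = count negb a + downs c k.
Proof. by rewrite /downs takeD take_size_cat // drop_size_cat // count_cat. Qed.
Lemma ups_cons x s k : ups (x :: s) k.+1 = x + ups s k. Proof. by []. Qed.
Lemma downs_cons x s k : downs (x :: s) k.+1 = ~~ x + downs s k. Proof. by []. Qed.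

Lemma ups_prm b k : k <= size b -> ups (prm b) k.+1 = (ups b k).+1.
Proof. by move=> H; rewrite /prm ups_cons ups_catl. Qed.
Lemma downs_prm b k : k <= size b -> downs (prm b) k.+1 = downs b k.
Proof. by move=> H; rewrite /prm downs_cons downs_catl. Qed.
Lemma size_prm b : size (prm b) = (size b).+2.
Proof. by rewrite /prm /= size_cat addn1. Qed.
Lemma cnt_prm b : count id (prm b) = (count id b).+1 /\ count negb (prm b) = (count negb b).+1.
Proof. by rewrite /prm /= !count_cat /=; split; lia. Qed.

Lemma dy_nil : dy [::].
Proof. by split => // k; rewrite /downs /ups. Qed.

Lemma dy_cat a b : dy a -> dy b -> dy (a ++ b).
Proof.
move=> [Ha Ca] [Hb Cb]; split; last by rewrite !count_cat Ca Cb.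
move=> k; case: (leqP k (size a)) => Hk.
  by rewrite ups_catl // downs_catl.
have -> : k = size a + (k - size a) by lia.
rewrite ups_catr downs_catr Ca; have := Hb (k - size a); lia.
Qed.

Lemma prm_in b k : dy b -> 0 < k < (size b).+2 -> downs (prm b) k < ups (prm b) k.
Proof.
move=> [Hb _]; case: k => [|k] // /andP[_ Hk].
rewrite ups_prm ?downs_prm; try lia; have := Hb k; lia.
Qed.

Lemma dy_prm b : dy b -> dy (prm b).
Proof.
move=> Db; have [C1 C2] := cnt_prm b; have [Hb Cb] := Db.
split; last by rewrite C1 C2 Cb.
move=> k; case: k => [|k]; first by rewrite ups0 downs0.
case: (ltnP k (size b).+1) => Hk.
  by apply: ltnW; apply: prm_in.
by rewrite ups_over ?downs_over ?size_prm // C1 C2 Cb.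
Qed.

Lemma gr_in a b k : dy a -> dy b -> size a < k < size a + (size b).+2 ->
  downs (a ++ prm b) k < ups (a ++ prm b) k.
Proof.
move=> [_ Ca] Db /andP[H1 H2].
have -> : k = size a + (k - size a) by lia.
rewrite ups_catr downs_catr Ca ltn_add2l; apply: prm_in => //; lia.
Qed.

Lemma last_split s : dy s -> s != [::] ->
  exists a b, [/\ s = a ++ prm b, dy a & dy b].
Proof.
move=> [Hs Cs] sn0.
pose P k := (k < size s) && (ups s k == downs s k).
have exP : exists i, P i by exists 0; rewrite /P ups0 downs0 eqxx andbT lt0n size_eq0.
have ubP : forall i, P i -> i <= size s by move=> i /andP[/ltnW].
case: (ex_maxnP exP ubP) => j /andP[Hj Gj] Mj.
set a := take j s; set r := drop j s.
have Es : s = a ++ r by rewrite cat_take_drop.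
have Sa : size a = j by rewrite size_take Hj.
have Ca : count id a = count negb a by apply/eqP.
have Da : dy a.
  split => // k; case: (leqP k j) => Hk.
    by rewrite /ups /downs /a take_takel //; apply: Hs.
  by rewrite ups_over ?downs_over ?Sa ?(ltnW Hk) // Ca.
case: r Es => [|x r'] Es.
  by move: Hj; rewrite Es cats0 Sa ltnn.
have Hx : x = true.
  case: x Es => // Es; have := Hs (size a + 1).
  by rewrite Es ups_catr downs_catr Ca /= /ups /downs /= !take0 /=; lia.
subst x.
case/lastP: r' Es => [|b y] Es.
  by move: Cs; rewrite Es !count_cat Ca /=; lia.
have Hy : y = false.
  case: y Es => // Es; have := Hs (size a + (size b).+1).
  move: Cs; rewrite Es ups_catr downs_catr !count_cat Ca ups_cons downs_cons.
  rewrite -cats1 ups_catl // downs_catl // ups_over // downs_over //= !count_cat /=; lia.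
subst y.
have Es' : s = a ++ prm b by rewrite Es /prm cats1.
exists a, b; split => //.
have [C1 C2] := cnt_prm b.
split.
  move=> k; case: (leqP k (size b)) => Hk; last first.
    rewrite ups_over ?downs_over; try lia.
    by move: Cs; rewrite Es' !count_cat C1 C2 Ca; lia.
  have NP : ~~ P (size a + k.+1).
    apply/negP => /Mj; rewrite Sa; lia.
  have Hlt : size a + k.+1 < size s by rewrite Es' size_cat size_prm; lia.
  move: NP; rewrite /P Hlt /= => NP.
  have := Hs (size a + k.+1).
  move: NP; rewrite Es' ups_catr downs_catr ups_prm // downs_prm // Ca.
  lia.
by move: Cs; rewrite Es' !count_cat C1 C2 Ca; lia.
Qed.

Lemma split_uniq_lt a b a' b' : dy a -> dy b -> dy a' ->
  a ++ prm b = a' ++ prm b' -> ~ size a < size a'.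
Proof.
move=> Da Db [_ Ca'] E Hlt.
have Hsz : size a + (size b).+2 = size a' + (size b').+2.
  by rewrite -!size_prm -!size_cat E.
have := gr_in (k := size a') Da Db.
rewrite E ups_catl // downs_catl // ups_over // downs_over // Ca' ltnn.
move=> H; suff : false by []; apply: H; apply/andP; split; lia.
Qed.

Lemma split_uniq a b a' b' : dy a -> dy b -> dy a' -> dy b' ->
  a ++ prm b = a' ++ prm b' -> a = a' /\ b = b'.
Proof.
move=> Da Db Da' Db' E.
have Hs : size a = size a'.
  case: (ltngtP (size a) (size a')) => // H.
    by case: (split_uniq_lt Da Db Da' E H).
  by case: (split_uniq_lt Da' Db' Da (esym E) H).
move/eqP: E; rewrite eqseq_cat // => /andP[/eqP Ha /eqP Hb]; split => //.
move: Hb; rewrite /prm => -[]; rewrite !cats1; exact: rcons_injl.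
Qed.

Lemma td_rcons_f s : td (rcons s false) = (td s).+1.
Proof. by rewrite /td rev_rcons. Qed.
Lemma td_rcons_t s : td (rcons s true) = 0.
Proof. by rewrite /td rev_rcons. Qed.
Lemma td_catr x b : has id b -> td (x ++ b) = td b.
Proof. by move=> H; rewrite /td rev_cat find_cat has_rev H. Qed.

Lemma dy_nohas b : dy b -> ~~ has id b -> b = [::].
Proof.
move=> [_ Cb]; rewrite has_count -leqNgt leqn0 => /eqP H.
by apply/eqP; rewrite -size_eq0 -cnt_size -Cb H.
Qed.

Lemma td_dyU x b : dy b -> td (x ++ true :: b) = td b.
Proof.
move=> Db; case: (boolP (has id b)) => H.
  have -> : x ++ true :: b = (x ++ [:: true]) ++ b by rewrite -catA.
  by rewrite td_catr.
by rewrite (dy_nohas Db H) cats1 td_rcons_t.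
Qed.

Lemma td_prm a b : dy b -> td (a ++ prm b) = (td b).+1.
Proof.
move=> Db; rewrite /prm cats1 -rcons_cons -rcons_cat td_rcons_f td_dyU //.
Qed.

Inductive OP : seq bool -> Prop :=
| OP0 : OP [::]
| OPs S b : OP S -> dy b -> ~~ odd (td b) -> OP (S ++ prm b).

Lemma OP_dy S : OP S -> dy S.
Proof.
elim => [|S0 b _ IH Db _]; first exact: dy_nil.
by apply: dy_cat => //; apply: dy_prm.
Qed.

Lemma take_catl (a c : seq bool) j : j <= size a -> take j (a ++ c) = take j a.
Proof. exact: takel_cat. Qed.

Lemma OP_ret S : OP S -> forall j, 0 < j <= size S -> ends_at_ground S j ->
  odd (td (take j S)).
Proof.
elim => [|S0 b OS IH Db Eb] j /andP[j0 Hj] G; first by move: j0 Hj; rewrite /=; lia.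
have DS := OP_dy OS.
move: G Hj; rewrite /ends_at_ground size_cat size_prm => G Hj.
case: (leqP j (size S0)) => H1.
  by rewrite take_catl //; apply: IH; rewrite ?j0 ?H1 //; rewrite /ends_at_ground -(ups_catl (prm b)) // -(downs_catl (prm b)).
case: (ltnP j (size S0 + (size b).+2)) => H2.
  have := gr_in (k := j) DS Db; rewrite (eqP G) ltnn; move=> H; suff : false by [].
  by apply: H; apply/andP.
rewrite take_oversize ?size_cat ?size_prm // td_prm //=; by rewrite Eb.
Qed.

Lemma OP_of_cond s : dy s ->
  (forall j, 0 < j <= size s -> ends_at_ground s j -> odd (td (take j s))) -> OP s.
Proof.
suff H : forall n s, size s < n -> dy s ->
  (forall j, 0 < j <= size s -> ends_at_ground s j -> odd (td (take j s))) -> OP s.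
  by apply: (H (size s).+1).
elim => [|n IH] {}s Hs Ds C //.
case: (eqVneq s [::]) => [->|sn0]; first by constructor.
have [a [b [Es Da Db]]] := last_split Ds sn0.
have Sa : size a < n by move: Hs; rewrite Es size_cat size_prm; lia.
have Ct : odd (td (take (size s) s)).
  apply: C; first by rewrite lt0n size_eq0 sn0 leqnn.
  by rewrite /ends_at_ground ups_over // downs_over //; case: Ds => _ ->.
move: Ct; rewrite take_size Es td_prm //= => Eb.
apply: OPs => //.
apply: IH => //.
move=> j /andP[j0 Hj] G.
have := C j; rewrite Es take_catl // size_cat; apply => //.
  by rewrite j0 /=; lia.
by rewrite /ends_at_ground ups_catl // downs_catl.
Qed.

Lemma EOP_ex Y : dy Y -> exists Q S, [/\ Y = Q ++ S, dy Q, ~~ odd (td Q) & OP S].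
Proof.
suff H : forall n Y, size Y < n -> dy Y ->
  exists Q S, [/\ Y = Q ++ S, dy Q, ~~ odd (td Q) & OP S].
  by apply: (H (size Y).+1).
elim => [|n IH] {}Y Hs DY //.
case: (eqVneq Y [::]) => [->|Yn0]; first by exists [::], [::]; split; [done | exact: dy_nil | done | constructor].
have [a [b [Es Da Db]]] := last_split DY Yn0.
case: (boolP (odd (td b))) => Ob.
  exists Y, [::]; split; [by rewrite cats0 | done | by rewrite Es td_prm //= Ob | constructor].
have Sa : size a < n by move: Hs; rewrite Es size_cat size_prm; lia.
have [Q [S0 [EA DQ EQ OS0]]] := IH a Sa Da.
exists Q, (S0 ++ prm b); split => //; first by rewrite Es EA catA.
by constructor.
Qed.

Lemma EOP_uniq Q S Q' S' : dy Q -> dy Q' -> ~~ odd (td Q) -> ~~ odd (td Q') ->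
  OP S -> OP S' -> Q ++ S = Q' ++ S' -> Q = Q' /\ S = S'.
Proof.
move=> DQ DQ' EQ EQ' OS; elim: OS Q' S' DQ' EQ' => [|S0 b OS0 IH Db Eb] Q' S' DQ' EQ' OS' E.
  case: OS' E => [|S0' b' OS0' Db' Eb'] E; first by split => //; move: E; rewrite (cats0 Q) (cats0 Q').
  by move: EQ; rewrite -(cats0 Q) E catA td_prm //= Eb'.
case: OS' E => [|S0' b' OS0' Db' Eb'] E.
  by move: EQ'; rewrite -(cats0 Q') -E catA td_prm //= Eb.
move: E; rewrite !catA => E.
have [E1 E2] := split_uniq (dy_cat DQ (OP_dy OS0)) Db (dy_cat DQ' (OP_dy OS0')) Db' E.
have [-> ->] := IH Q' S0' DQ' EQ' OS0' E1.
by rewrite E2.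
Qed.

Lemma td_le s : td s <= size s.
Proof. by rewrite /td -size_rev find_size. Qed.

Lemma td_false s k : size s - td s <= k < size s -> nth true s k = false.
Proof.
move=> /andP[H1 H2].
have Hm : size s - k.+1 < td s by lia.
have := before_find true Hm; rewrite nth_rev ?size_rev; last by have := td_le s; lia.
by have -> : size s - (size s - k.+1).+1 = k by lia.
Qed.

Lemma td_true s : td s < size s -> nth false s (size s - (td s).+1) = true.
Proof.
move=> H.
have Hh : has id (rev s) by rewrite has_find size_rev.
by have := nth_find false Hh; rewrite nth_rev // size_rev.
Qed.

Lemma td_nseq x m : td (x ++ nseq m false) = m + td x.
Proof.
rewrite /td rev_cat rev_nseq find_cat has_nseq andbF size_nseq //.
Qed.

Lemma ups_rcons s x : count id (rcons s x) = count id s + x.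
Proof. by rewrite -cats1 count_cat /= addn0. Qed.
Lemma downs_rcons s x : count negb (rcons s x) = count negb s + ~~ x.
Proof. by rewrite -cats1 count_cat /= addn0. Qed.

Lemma ret_prev p j : dy p -> 0 < j <= size p -> ends_at_ground p j ->
  take j p = rcons (take j.-1 p) false.
Proof.
move=> [Hp _] /andP[j0 Hj] G.
have Hi : j.-1 < size p by lia.
have := take_nth false Hi; rewrite prednK // => E.
rewrite E; case Hx : (nth false p j.-1) => //.
have := Hp j.-1; move: G; rewrite /ends_at_ground /ups /downs E ups_rcons downs_rcons Hx /=.
lia.
Qed.

Lemma ret_next p j : dy p -> j < size p -> ends_at_ground p j -> nth false p j = true.
Proof.
move=> [Hp _] Hj G.
have E := take_nth false Hj.
case Hx : (nth false p j) => //.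
have := Hp j.+1; move: G; rewrite /ends_at_ground /ups /downs E ups_rcons downs_rcons Hx /=.
lia.
Qed.

Lemma D1 p j : dy p -> 0 < j <= size p -> ends_at_ground p j ->
  is_descent p (j - td (take j p)) j.
Proof.
move=> Dp Hj G.
have Sj : size (take j p) = j by rewrite size_takel //; case/andP: Hj.
have Ht : 0 < td (take j p) by rewrite (ret_prev Dp Hj G) td_rcons_f.
have Hle := td_le (take j p); rewrite Sj in Hle.
case/andP: Hj => j0 Hj.
apply/and5P; split.
- lia.
- exact: Hj.
- apply/forallP => k; apply/implyP => /andP[Hk1 Hk2].
  rewrite -(nth_take true Hk2) td_false //; rewrite Sj; lia.
- case: (eqVneq (j - td (take j p)) 0) => //= Hne.
  have Htl : td (take j p) < size (take j p) by rewrite Sj; lia.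
  have := td_true Htl; rewrite Sj nth_take; last lia.
  by have -> : (j - td (take j p)).-1 = j - (td (take j p)).+1 by lia.
- case: (eqVneq j (size p)) => //= Hne.
  by apply: ret_next => //; lia.
Qed.

Lemma D2 p i j : is_descent p i j -> td (take j p) = j - i.
Proof.
move=> /and5P[Hij Hj Hf Hi _].
have -> : j = i + (j - i) by lia.
rewrite takeD.
have -> : take (j - i) (drop i p) = nseq (j - i) false.
  have Sz : size (take (j - i) (drop i p)) = j - i by rewrite size_takel // size_drop; lia.
  apply: (eq_from_nth (x0 := true)); first by rewrite Sz size_nseq.
  move=> m; rewrite Sz => Hm'.
  rewrite nth_take // nth_drop nth_nseq Hm'.
  have Hk : i + m < size p by lia.
  have := forallP Hf (Ordinal Hk); move=> /implyP /= H.
  by apply/negbTE; apply: H; apply/andP; split; lia.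
rewrite td_nseq.
suff -> : td (take i p) = 0 by rewrite addn0; lia.
case: (eqVneq i 0) Hi => [->|Hi0] /= Hi; first by rewrite take0.
have Hi1 : i.-1 < size p by lia.
by rewrite -(prednK (n := i)) ?lt0n // (take_nth false Hi1) Hi td_rcons_t.
Qed.

Lemma dyck_dy n p : dyck_path n p -> dy p /\ count id p = n.
Proof.
move=> /and3P[/eqP C1 /eqP C2]; rewrite forall_pk => /pkP H.
by split => //; split; [move=> k; have := H k | rewrite C1 C2].
Qed.

Lemma dy_dyck n p : dy p -> count id p = n -> dyck_path n p.
Proof.
move=> [Hp Cp] Cn; apply/and3P; split; first by rewrite Cn.
  by rewrite -Cp Cn.
by rewrite forall_pk; apply/pkP.
Qed.

Lemma inA_desc n p i j : in_A n p -> is_descent p i j ->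
  if j == size p then ~~ odd (j - i) else ends_at_ground p j ==> odd (j - i).
Proof.
move=> /andP[_ /forallP Hf] D.
have /and5P[Hij Hj _ _ _] := D.
have Hi : i < (size p).+1 by lia.
have Hj' : j < (size p).+1 by lia.
have := forallP (Hf (Ordinal Hi)) (Ordinal Hj'); rewrite /= D /=; done.
Qed.

Definition Rl (p x : seq bool) : Prop := exists S W Q,
  [/\ OP S, dy W, dy Q, ~~ odd (td Q) & p = S ++ prm (W ++ prm Q) /\ x = Q ++ S ++ prm W].

Lemma inA_Rl n p : in_A n p -> 0 < n -> exists x, Rl p x.
Proof.
move=> HA n0; have := HA; move=> /andP[/dyck_dy [Dp Cp] _].
have pn0 : p != [::] by apply/eqP => E; move: Cp; rewrite E /=; lia.
have [S [O [Ep DS DO]]] := last_split Dp pn0.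
have Gs : ends_at_ground p (size p).
  by rewrite /ends_at_ground ups_over // downs_over //; case: Dp => _ ->.
have Hsp : 0 < size p <= size p by rewrite lt0n size_eq0 pn0 leqnn.
have := inA_desc HA (D1 Dp Hsp Gs); rewrite eqxx take_size.
have Hle := td_le p.
have -> : size p - (size p - td p) = td p by lia.
rewrite {1}Ep td_prm //= negbK => OO.
have On0 : O != [::] by apply/eqP => E; move: OO; rewrite E.
have [W [Q [EO DW DQ]]] := last_split DO On0.
move: OO; rewrite EO td_prm //= => EQ.
exists (Q ++ S ++ prm W), S, W, Q; split => //; last by rewrite Ep EO.
apply: OP_of_cond => // j /andP[j0 Hj] G.
have HjS : size S < size p by rewrite Ep size_cat size_prm; lia.
have Gp : ends_at_ground p j by move: G; rewrite /ends_at_ground Ep ups_catl // downs_catl.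
have Hjp : 0 < j <= size p by rewrite j0; lia.
have := inA_desc HA (D1 Dp Hjp Gp).
have -> : (j == size p) = false by apply/eqP; lia.
rewrite Gp /=.
have Ht : take j p = take j S by rewrite Ep take_catl.
have Hle2 := td_le (take j p).
have Sz : size (take j p) = j by rewrite size_takel //; lia.
rewrite Sz in Hle2.
have -> : j - (j - td (take j p)) = td (take j p) by lia.
by rewrite Ht.
Qed.

Lemma Rl_dy p x : Rl p x -> [/\ dy p, dy x, count id p = (count id x).+1 & size p = (size x).+2].
Proof.
case=> S [W [Q [OS DW DQ EQ [-> ->]]]].
have DS := OP_dy OS.
split.
- by apply: dy_cat => //; apply: dy_prm; apply: dy_cat => //; apply: dy_prm.
- by apply: dy_cat => //; apply: dy_cat => //; apply: dy_prm.
- have [C1 _] := cnt_prm (W ++ prm Q); have [C2 _] := cnt_prm Q; have [C3 _] := cnt_prm W.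
  rewrite !count_cat C1 C3 count_cat C2; lia.
- rewrite !size_cat !size_prm size_cat size_prm; lia.
Qed.

Lemma Rl_inA n p x : Rl p x -> count id p = n -> in_A n p.
Proof.
move=> R Cn; have [Dp _ _ _] := Rl_dy R.
case: R => S [W [Q [OS DW DQ EQ [Ep Ex]]]].
have DS := OP_dy OS.
apply/andP; split; first exact: dy_dyck.
apply/forallP => i; apply/forallP => j; apply/implyP.
move: (nat_of_ord i) (nat_of_ord j) => {i j} i j D.
have Htd := D2 D.
have /and5P[Hij Hj _ _ _] := D.
case: eqP => Hjs.
  move: Htd; rewrite Hjs take_size {1}Ep td_prm ?td_prm //; last first.
    by apply: dy_cat => //; apply: dy_prm.
  by move=> <- /=; rewrite negbK.
apply/implyP => G.
have HjS : j <= size S.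
  case: (leqP j (size S)) => // H.
  have DO : dy (W ++ prm Q) by apply: dy_cat => //; apply: dy_prm.
  have := gr_in (k := j) DS DO; rewrite -Ep (eqP G) ltnn.
  move=> H'; suff : false by []; apply: H'; apply/andP; split => //.
  by move: Hj Hjs; rewrite Ep size_cat size_prm; lia.
rewrite -Htd Ep take_catl //; apply: OP_ret => //; first by apply/andP; split => //; lia.
by move: G; rewrite /ends_at_ground Ep ups_catl // downs_catl.
Qed.

Lemma dyck_Rl x : dy x -> x != [::] -> exists p, Rl p x.
Proof.
move=> Dx xn0.
have [Y [W [Ex DY DW]]] := last_split Dx xn0.
have [Q [S [EY DQ EQ OS]]] := EOP_ex DY.
exists (S ++ prm (W ++ prm Q)), S, W, Q; split => //.
by rewrite Ex EY catA.
Qed.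

Lemma Rl_uniqA p x x' : Rl p x -> Rl p x' -> x = x'.
Proof.
case=> S [W [Q [OS DW DQ EQ [Ep Ex]]]].
case=> S' [W' [Q' [OS' DW' DQ' EQ' [Ep' Ex']]]].
have DO : dy (W ++ prm Q) by apply: dy_cat => //; apply: dy_prm.
have DO' : dy (W' ++ prm Q') by apply: dy_cat => //; apply: dy_prm.
have [E1 E2] := split_uniq (OP_dy OS) DO (OP_dy OS') DO' (etrans (esym Ep) Ep').
have [E3 E4] := split_uniq DW DQ DW' DQ' E2.
by rewrite Ex Ex' E1 E3 E4.
Qed.

Lemma Rl_uniqB p p' x : Rl p x -> Rl p' x -> p = p'.
Proof.
case=> S [W [Q [OS DW DQ EQ [Ep Ex]]]].
case=> S' [W' [Q' [OS' DW' DQ' EQ' [Ep' Ex']]]].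
have E : (Q ++ S) ++ prm W = (Q' ++ S') ++ prm W' by rewrite -!catA -Ex -Ex'.
have [E1 E2] := split_uniq (dy_cat DQ (OP_dy OS)) DW (dy_cat DQ' (OP_dy OS')) DW' E.
have [E3 E4] := EOP_uniq DQ DQ' EQ EQ' OS OS' E1.
by rewrite Ep Ep' E2 E3 E4.
Qed.

Theorem theorem1 (n : nat) : 2 <= n -> #|A_set n| = catalan n.-1.
Proof.
move=> n2.
rewrite -card_dyck; last lia.
set m := n.-1.
have Hm : 2 * n = (2 * m).+2 by rewrite /m; lia.
pose u0 : (2 * m).-tuple bool := nseq_tuple (2 * m) false.
pose f (t : (2 * n).-tuple bool) : (2 * m).-tuple bool :=
  epsilon (inhabits u0) (fun u => Rl t u).
have fA : forall t, t \in A_set n -> Rl t (f t).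
  move=> t; rewrite inE => HA.
  have [x Rx] := inA_Rl HA (ltnW n2).
  have [_ _ _ Sx] := Rl_dy Rx.
  have Hs : size x == 2 * m by move: Sx; rewrite size_tuple Hm => -[->].
  by apply: (epsilon_spec (inhabits u0) (fun u => Rl t u)); exists (Tuple Hs).
have finj : {in A_set n &, injective f}.
  move=> t1 t2 H1 H2 E; apply: val_inj.
  by apply: (Rl_uniqB (x := f t1)) => //; [exact: fA | rewrite E; exact: fA].
rewrite -(card_in_imset finj); apply: eq_card => u.
rewrite [in RHS]inE; apply/imsetP/idP.
- case=> t Ht ->.
  have R := fA t Ht.
  have [_ Du Cp _] := Rl_dy R.
  move: Ht; rewrite inE => /andP[/dyck_dy [_ Cn] _].
  apply: dy_dyck => //; suff : (count id (f t)).+1 = m.+1 by case.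
  by rewrite -Cp Cn /m (prednK (ltnW n2)).
- move/dyck_dy => [Du Cu].
  have un0 : tval u != [::] by rewrite -size_eq0 size_tuple /m; lia.
  have [p Rp] := dyck_Rl Du un0.
  have [_ _ Cp Sp] := Rl_dy Rp.
  have Hs : size p == 2 * n by rewrite Sp size_tuple Hm.
  have HA : Tuple Hs \in A_set n.
    by rewrite inE; apply: (Rl_inA Rp); rewrite Cp Cu /m; lia.
  exists (Tuple Hs) => //; apply: val_inj.
  exact: (Rl_uniqA Rp (fA _ HA)).
Qed.
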